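(* There is a function $f_1(k,q)$ satisfying the following. Let $k,q\ge 2$ be integers. Let $T$ be a tree whose edges are labeled by elements of $\mathbb{Z}_q$, and let $L$ be a set of leaves of $T$ with $|L|=f_1(k,q)$. Then there exist a subset $L_0\subset L$ with $|L_0|=k$ and a residue $a\in\mathbb{Z}_q$ such that for every three leaves $x_1,x_2,x_3\in L_0$ there is a vertex $v\in V(T)$ such that the paths in $T$ from $v$ to $x_1$, $x_2$, $x_3$ are pairwise disjoint except at $v$ and each has weight $a$ modulo $q$.
   Context: The weight of a path in an edge-labeled tree is the sum (in $\mathbb{Z}_q$) of the labels of its edges. *)

(* Defs.v *)
From mathcomp Require Import all_boot all_algebra.
Set Implicit Arguments. Unset Strict Implicit. Unset Printing Implicit Defensive.
Import GRing.Theory.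

Definition simple_graph (T : finType) (e : rel T) : Prop :=
  symmetric e /\ irreflexive e.

(* acyclic: no cycle x -> p_1 -> ... -> p_m -> x with x :: p a simple path
   and m >= 2 (i.e. a cycle of length >= 3). *)
Definition acyclic (T : finType) (e : rel T) : Prop :=
  forall (x : T) (p : seq T),
    path e x p -> uniq (x :: p) -> 2 <= size p -> ~~ e (last x p) x.

Definition is_tree (T : finType) (e : rel T) : Prop :=
  [/\ simple_graph e, (forall x y : T, connect e x y) & acyclic e].

Definition leaves (T : finType) (e : rel T) : {set T} :=
  [set x | #|[set y | e x y]| == 1%N].

Definition tpath (T : finType) (e : rel T) (v : T) (p : seq T) (x : T) : Prop :=
  [/\ path e v p, uniq (v :: p) & last v p = x].

Definition weight (T : finType) (q : nat) (lab : T -> T -> 'Z_q)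
  (v : T) (p : seq T) : 'Z_q :=
  (\sum_(z <- pairmap lab v p) z)%R.

(* Main.v *)
Require Import Defs.
From mathcomp Require Import all_boot all_algebra.
From mathcomp Require Import zify.
Set Implicit Arguments. Unset Strict Implicit. Unset Printing Implicit Defensive.

Section Uniq.
Variables (T : finType) (e : rel T).
Hypothesis e_sym : symmetric e.
Hypothesis acyc : acyclic e.

Lemma path_conv x p : path e x p = path (fun z => e^~ z) x p.
Proof. by apply: eq_path => y z /=; rewrite e_sym. Qed.

Lemma iter_cyc a' s' : uniq (a' :: s') -> path e a' s' ->
  forall s F, path e a' F -> uniq (a' :: F) -> F != [::] ->
   (forall z, z \in F -> z \notin a' :: s') ->
   path e (last a' F) s -> last (last a' F) s \in a' :: s' ->
   uniq (F ++ s) -> (1 < size F) || (head a' s != a') -> False.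
Proof.
move=> us' ps'; elim=> [|b s IH] F pF uF nF dF ps ls us Q.
  case: F nF pF uF dF ls {ps us Q} => [//|z F'] _ _ _ dF /= ls.
  by have := dF _ (mem_last z F'); rewrite ls.
move: ps => /= /andP [eb ps].
case: (boolP (b \in a' :: s')) => bin.
  case: (eqVneq b a') => [Eb | nb].
    subst b; move: Q; rewrite /= eqxx orbF => Q.
    by have := acyc pF uF Q; rewrite eb.
  move: bin; rewrite inE (negPf nb) /= => bin.
  case/splitPr: bin dF ls us' ps' => t1 t2 dF ls us' ps'.
  have pt : path e a' (rcons t1 b).
    by move: ps'; rewrite cat_path rcons_path => /andP [-> /= /andP [-> _]].
  have := pt; rewrite path_conv -rev_path last_rcons belast_rcons rev_cons.
  rewrite rcons_path => /andP [prt elast].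
  have Hsz : 2 <= size (F ++ b :: rev t1).
    rewrite size_cat /=; case: (F) nF => //= z F' _; by rewrite addSn addnS.
  have Hp : path e a' (F ++ b :: rev t1) by rewrite cat_path pF /= eb prt.
  have Hu : uniq (a' :: F ++ b :: rev t1).
    rewrite -cat_cons cat_uniq uF /=.
    have na' : a' \notin t1 ++ b :: t2 by case/andP: us'.
    have ucat : uniq (t1 ++ b :: t2) by case/andP: us'.
    move: (ucat); rewrite cat_uniq => /and3P [ut1 hb _].
    have bt1 : b \notin t1 by apply: (hasPn hb); rewrite mem_head.
    rewrite rev_uniq ut1 mem_rev bt1 !andbT negb_or; apply/andP; split.
      rewrite inE negb_or nb /=; apply/negP => bF.
      by have := dF _ bF; rewrite !inE mem_cat inE eqxx !orbT.
    apply/hasPn => z; rewrite mem_rev => zt1.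
    rewrite inE negb_or; apply/andP; split.
      by apply/eqP => E; subst z; move: na'; rewrite mem_cat zt1.
    apply/negP => zF; have := dF _ zF; by rewrite !inE mem_cat zt1 !orbT.
  have := acyc Hp Hu Hsz; by rewrite last_cat /= elast.
apply: (IH (rcons F b)).
- by rewrite rcons_path pF eb.
- move: us; rewrite cat_uniq /= => /and3P [_ /norP [bF _] _].
  rewrite /= rcons_uniq bF mem_rcons inE negb_or.
  move: uF => /= /andP [-> ->]; rewrite andbT andbT.
  by move: bin; rewrite inE negb_or eq_sym => /andP [].
- by case: (F).
- move=> z; rewrite mem_rcons inE => /orP [/eqP -> //| ]; exact: dF.
- by rewrite last_rcons.
- by rewrite last_rcons.
- by rewrite cat_rcons.
- by rewrite size_rcons; case: (F) nF.
Qed.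

Lemma tpath_uniq v p p' x : tpath e v p x -> tpath e v p' x -> p = p'.
Proof.
elim: p v p' => [|a s IH] v [|a' s'] //.
- move=> [_ _ /= ->] [_ /= /andP [nv _] l2].
  by move: nv; rewrite -l2 mem_last.
- move=> [_ /= /andP [nv _] l2] [_ _ /= E].
  by move: nv; rewrite E -l2 mem_last.
move=> [p1 u1 l1] [p2 u2 l2].
case: (eqVneq a a') => [E | na].
  subst a'; congr (_ :: _); apply: (IH a).
    split; [by move: p1 => /= /andP [] | by move: u1 => /= /andP [] | by []].
  split; [by move: p2 => /= /andP [] | by move: u2 => /= /andP [] | by []].
exfalso.
move: (u2) (p2) => /= /andP [nv us'] /andP [ev ps'].
apply: (iter_cyc (a':=a') (s':=s') us' ps' (s := a :: s) (F := [:: v])).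
- by rewrite /= e_sym ev.
- by rewrite /= inE andbT; move: nv; rewrite inE negb_or eq_sym => /andP [].
- by [].
- by move=> z; rewrite mem_seq1 => /eqP ->.
- exact: p1.
- by move: l1 l2 => /= -> <-; exact: mem_last.
- exact: u1.
- by rewrite /= na.
Qed.
End Uniq.
Lemma last_take_nth (T : Type) (s : seq T) x i : i <= size s ->
  last x (take i s) = nth x (x :: s) i.
Proof.
elim: s x i => [|y s IH] x [|i] //= H.
rewrite IH //; apply: set_nth_default; exact: H.
Qed.

Lemma last_rev_belast (T : Type) (a : T) d : last (last a d) (rev (belast a d)) = a.
Proof.
have E : last a d :: rev (belast a d) = rcons (rev d) a.
  by rewrite -rev_rcons -lastI rev_cons.
Show.
by have := congr1 (last a) E; rewrite last_rcons.
Qed.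

Lemma ar_sub t s h : t - s <= h.+1 -> t - s.+1 <= h.
Proof. lia. Qed.
Lemma ar_pig a m p x : a < m -> 0 < p -> m * p <= x -> a * p.-1 < x.
Proof. nia. Qed.
Lemma ar_pred p x : p.-1 < x -> 0 < p -> p <= x.
Proof. lia. Qed.
Lemma ar_pos m n : 1 < m -> m <= m ^ n.+1.
Proof. by move=> m1; rewrite expnS leq_pmulr // expn_gt0 (ltnW m1). Qed.

Lemma pigeon (I J : finType) (A : {set I}) (f : I -> J) M :
  (forall b, #|[set y | (y \in A) && (f y == b)]| <= M) -> #|A| <= #|f @: A| * M.
Proof.
move=> H; rewrite -sum1_card (partition_big f (mem (f @: A))) /=; last first.
  by move=> i iA; apply: imset_f.
apply: (@leq_trans (\sum_(b in f @: A) M)); last by rewrite sum_nat_const.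
by apply: leq_sum => b _; rewrite sum1dep_card.
Qed.

Lemma pigeon_ex (I J : finType) (A : {set I}) (f : I -> J) M :
  #|f @: A| * M < #|A| -> exists b, M < #|[set y | (y \in A) && (f y == b)]|.
Proof.
move=> H; case: (boolP [exists b, M < #|[set y | (y \in A) && (f y == b)]|]) => [/existsP //|/existsPn Hn].
have : #|A| <= #|f @: A| * M by apply: pigeon => b; have := Hn b; rewrite -leqNgt.
by rewrite leqNgt H.
Qed.

Definition Good (T : finType) (e : rel T) (q : nat) (lab : T -> T -> 'Z_q) (a : 'Z_q) (x1 x2 x3 : T) : Prop :=
  exists v : T, exists p1 p2 p3 : seq T,
        [/\ tpath e v p1 x1, tpath e v p2 x2, tpath e v p3 x3,
            [/\ [predI p1 & p2] =i pred0, [predI p1 & p3] =i pred0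
              & [predI p2 & p3] =i pred0] &
            [/\ weight lab v p1 = a, weight lab v p2 = a
              & weight lab v p3 = a]].

Lemma disjP (T : eqType) (s1 s2 : seq T) :
  (forall w, w \in s1 -> w \in s2 -> False) -> [predI s1 & s2] =i pred0.
Proof. by move=> H w; rewrite !inE; apply/negbTE/andP => [[h1 h2]]; exact: H w h1 h2. Qed.

Lemma disj_sym (T : eqType) (s1 s2 : seq T) :
  [predI s1 & s2] =i pred0 -> [predI s2 & s1] =i pred0.
Proof. by move=> H w; have := H w; rewrite !inE andbC. Qed.

Lemma tpath_cat (T : finType) (e : rel T) v p z p' x :
  tpath e v p z -> tpath e z p' x -> (forall w, w \in p' -> w \notin v :: p) ->
  tpath e v (p ++ p') x.
Proof.
move=> [pp up lp] [pp' up' lp'] H; split.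
- by rewrite cat_path pp lp.
- have up'' : uniq p' by case/andP: up'.
  rewrite -cat_cons cat_uniq up up'' andbT.
  by apply/hasPn => w wp; exact: H.
- by rewrite last_cat lp.
Qed.

Import GRing.Theory.
Section Struct.
Variables (T : finType) (e : rel T) (q : nat) (lab : T -> T -> 'Z_q).
Hypothesis e_sym : symmetric e.
Hypothesis labsym : forall x y, lab x y = lab y x.
Variable r : T.
Variable P : T -> seq T.
Hypothesis Pt : forall x, tpath e r (P x) x.
Hypothesis Pu : forall x p, tpath e r p x -> p = P x.

Definition Sq x := r :: P x.
Local Notation anc u x := (u \in Sq x).
Definition down c x := drop (size (Sq c)) (Sq x).
Definition D x := weight lab r (P x).

Lemma uniqS x : uniq (Sq x). Proof. by case: (Pt x). Qed.
Lemma lastS x : last r (P x) = x. Proof. by case: (Pt x). Qed.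
Lemma pathS x : path e r (P x). Proof. by case: (Pt x). Qed.

Lemma coh x z : anc z x -> take (index z (Sq x)).+1 (Sq x) = Sq z.
Proof.
move=> zin.
have Hi : index z (Sq x) <= size (P x) by have := index_mem z (Sq x); rewrite zin.
have Hn := nth_index r zin.
move: Hi Hn; set i := index z (Sq x) => Hi Hn.
rewrite /Sq /= (Pu (x := z) (p := take i (P x))) //.
split.
- by have := pathS x; rewrite -{1}(cat_take_drop i (P x)) cat_path => /andP [].
- by have := take_uniq i.+1 (uniqS x).
- by rewrite last_take_nth.
Qed.

Lemma anc_refl x : anc x x.
Proof. by rewrite /Sq -{1}(lastS x) mem_last. Qed.

Lemma anc_r x : anc r x. Proof. exact: mem_head. Qed.

Lemma prefix z x : anc z x -> Sq x = Sq z ++ down z x.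
Proof.
move=> H; rewrite /down -(coh H).
have Hi : index z (Sq x) < size (Sq x) by rewrite index_mem.
by rewrite size_takel // cat_take_drop.
Qed.

Lemma anc_trans a b c : anc a b -> anc b c -> anc a c.
Proof. by move=> Hab Hbc; rewrite (prefix Hbc) mem_cat Hab. Qed.

Lemma anc_total a b x : anc a x -> anc b x -> anc a b \/ anc b a.
Proof.
move=> Ha Hb.
case: (leqP (index a (Sq x)) (index b (Sq x))) => H; [left|right].
  have : a \in take (index a (Sq x)).+1 (Sq x) by rewrite (coh Ha) anc_refl.
  have H' : (index a (Sq x)).+1 <= (index b (Sq x)).+1 by rewrite ltnS.
  by rewrite -(take_takel _ H') (coh Hb) => /mem_take.
have : b \in take (index b (Sq x)).+1 (Sq x) by rewrite (coh Hb) anc_refl.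
have H' : (index b (Sq x)).+1 <= (index a (Sq x)).+1 by rewrite ltnS ltnW.
by rewrite -(take_takel _ H') (coh Ha) => /mem_take.
Qed.

Lemma anc_anti a b : anc a b -> anc b a -> a = b.
Proof.
move=> Hab Hba.
have E1 := prefix Hab; have E2 := prefix Hba.
have Hd : down a b = [::].
  have := congr1 size E1; have := congr1 size E2; rewrite !size_cat => h2 h1.
  apply/eqP; rewrite -size_eq0; apply/eqP.
  have : size (Sq a) + 0 = size (Sq a) + (size (down a b) + size (down b a)).
    by rewrite addn0 addnA -h1 -h2.
  by move/addnI => /esym/eqP; rewrite addn_eq0 => /andP [/eqP H _]; exact: H.
move: E1; rewrite Hd cats0 /Sq => [[E]].
by rewrite -(lastS a) -(lastS b) E.
Qed.

Lemma sizeS x : size (Sq x) <= #|T|.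
Proof. by rewrite -(card_uniqP (uniqS x)) max_card. Qed.

Lemma uniq_down c x : anc c x -> uniq (Sq c ++ down c x).
Proof. by move=> H; rewrite -(prefix H) uniqS. Qed.

Lemma P_down c x : anc c x -> P x = P c ++ down c x.
Proof. by move=> H; have := prefix H; rewrite /Sq /= => [[]]. Qed.

Lemma down_tpath c x : anc c x -> tpath e c (down c x) x.
Proof.
move=> H; have E := P_down H; split.
- by have := pathS x; rewrite E cat_path lastS => /andP [].
- have := uniq_down H; rewrite cat_uniq => /and3P [_ Hn Hu].
  rewrite cons_uniq Hu andbT; apply/negP => cd.
  by have := hasPn Hn c cd; rewrite anc_refl.
- by have := lastS x; rewrite E last_cat lastS.
Qed.

Lemma down_mem c x z : anc c x -> z \in down c x -> [/\ anc z x, anc c z & z != c].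
Proof.
move=> H zd.
have zS : z \notin Sq c.
  have := uniq_down H; rewrite cat_uniq => /and3P [_ /hasPn Hn _]; exact: Hn z zd.
have zx : anc z x by rewrite (prefix H) mem_cat zd orbT.
split => //.
  case: (anc_total H zx) => // Hzc.
  by move: zS; rewrite Hzc.
by apply/eqP => E; move: zS; rewrite E anc_refl.
Qed.

Lemma weight_cat v p p' : weight lab v (p ++ p') = (weight lab v p + weight lab (last v p) p')%R.
Proof. by rewrite /weight pairmap_cat big_cat. Qed.

Lemma D_down c x : anc c x -> weight lab c (down c x) = (D x - D c)%R.
Proof.
move=> H; rewrite /D (P_down H) weight_cat lastS.
by rewrite addrC addKr.
Qed.

Definition up a c := rev (belast a (down a c)).

Lemma weight_rev a d : weight lab (last a d) (rev (belast a d)) = weight lab a d.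
Proof.
elim: d a => [|b d IH] a; first by [].
change (weight lab (last b d) (rev (a :: belast b d)) = weight lab a (b :: d)).
rewrite rev_cons -cats1 weight_cat last_rev_belast IH /weight.
change (pairmap lab a (b :: d)) with (lab a b :: pairmap lab b d).
change (pairmap lab b [:: a]) with [:: lab b a].
by rewrite !big_cons big_nil addr0 addrC labsym.
Qed.

Lemma up_tpath a c : anc a c -> tpath e c (up a c) a.
Proof.
move=> H; have [p1 u1 l1] := down_tpath H.
rewrite /up; set d := down a c in p1 u1 l1 *.
have E : c :: rev (belast a d) = rev (a :: d) by rewrite [a :: d]lastI l1 rev_rcons.
split.
- by have := rev_path e a d; rewrite l1 => ->; rewrite -(path_conv e_sym).
- by rewrite E rev_uniq.
- by move: (last_rev_belast a d); rewrite l1.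
Qed.

Lemma up_mem a c z : anc a c -> z \in up a c -> anc z c /\ z != c.
Proof.
move=> H; have [p1 u1 l1] := down_tpath H.
rewrite /up mem_rev; set d := down a c in p1 u1 l1 *.
move=> zb; split.
  move: (mem_belast zb); rewrite inE => /orP [/eqP -> | zd]; first exact: H.
  by case: (down_mem H zd).
apply/eqP => E; subst z.
by move: u1; rewrite lastI l1 rcons_uniq zb.
Qed.

Lemma D_up a c : anc a c -> weight lab c (up a c) = (D c - D a)%R.
Proof.
move=> H; have [_ _ l1] := down_tpath H.
by rewrite /up -{1}l1 weight_rev D_down.
Qed.


Definition nxt c x := head r (down c x).

Lemma nxt_props c x : anc c x -> c != x ->
  [/\ nxt c x \in down c x, anc (nxt c x) x, anc c (nxt c x), nxt c x != c
    & size (Sq (nxt c x)) = (size (Sq c)).+1].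
Proof.
move=> H nx; have [_ _ l] := down_tpath H.
rewrite /nxt; case E: (down c x) l => [|w d] /= l.
  by move: nx; rewrite l eqxx.
have wd : w \in down c x by rewrite E mem_head.
have [wx cw wc] := down_mem H wd.
split => //; first exact: mem_head.
have Hs := coh wx.
have wS : w \notin Sq c.
  have := uniq_down H; rewrite cat_uniq => /and3P [_ /hasPn Hn _]; exact: Hn w wd.
have Hi : index w (Sq x) = size (Sq c).
  by rewrite (prefix H) index_cat (negPf wS) E /= eqxx addn0.
change (size (Sq w) = (size (Sq c)).+1).
rewrite -Hs size_takel Hi //.
by rewrite (prefix H) size_cat E /= addnS ltnS leq_addr.
Qed.

Lemma nxt_eq c z x : anc c z -> c != z -> anc z x -> nxt c x = nxt c z.
Proof.
move=> Hcz cz Hzx; have [_ _ l] := down_tpath Hcz.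
rewrite /nxt {1}/down (prefix Hzx) (prefix Hcz) -catA drop_size_cat //.
by case: (down c z) l => [/= E|//]; move: cz; rewrite E eqxx.
Qed.

Definition lcaP c x y := [/\ anc c x, anc c y & forall z, anc z x -> anc z y -> anc z c].

Lemma split_nxt c x y : anc c x -> anc c y -> c != x -> c != y -> nxt c x != nxt c y -> lcaP c x y.
Proof.
move=> Hx Hy nx ny nn; split => // z zx zy.
case: (anc_total zx Hx) => // Hcz.
case: (eqVneq c z) => [<-|cz]; first exact: anc_refl.
by move: nn; rewrite (nxt_eq Hcz cz zx) (nxt_eq Hcz cz zy) eqxx.
Qed.

Lemma leaf_anc x y : x \in leaves e -> x != r -> anc x y -> x = y.
Proof.
move=> Hl xr H; apply/eqP; apply/negP => /negP nxy.
have [wd _ _ _ _] := nxt_props H nxy.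
set w := nxt x y in wd.
have [p _ _] := down_tpath H.
have exw : e x w.
  move: p wd; rewrite /w /nxt; case: (down x y) => [//|w' d] /= /andP [-> _] //.
case/lastP E2: (P x) => [|P' u].
  by move: xr; rewrite -(lastS x) E2 eqxx.
have ux : u = x by rewrite -(lastS x) E2 last_rcons.
have := pathS x; rewrite E2 rcons_path ux => /andP [_ evx].
set v := last r P' in evx.
have vS : v \in Sq x.
  rewrite /Sq E2 -rcons_cons mem_rcons inE; apply/orP; right; exact: mem_last.
have vw : v != w.
  apply/eqP => E; have := uniq_down H; rewrite cat_uniq => /and3P [_ /hasPn Hn _].
  by have := Hn w wd; rewrite -E vS.
have : [set v; w] \subset [set z | e x z].
  by apply/subsetP => z; rewrite !inE => /orP [/eqP -> | /eqP ->] //; rewrite e_sym.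
move/subset_leq_card; rewrite cards2 vw.
by move: Hl; rewrite inE => /eqP ->.
Qed.

Variable Lv : {set T}.
Hypothesis LP : forall x, x \in Lv -> forall y, anc x y -> x = y.

Lemma A_neq c (A : {set T}) y : A \subset Lv -> 1 < #|A| ->
  (forall y, y \in A -> anc c y) -> y \in A -> c != y.
Proof.
move=> sA cA Hc yA; apply/eqP => E; subst c.
have : A \subset [set y].
  apply/subsetP => y' y'A; rewrite inE eq_sym; apply/eqP; apply: LP.
    exact: (subsetP sA).
  exact: Hc.
move/subset_leq_card; rewrite cards1 => H.
by have := leq_trans cA H.
Qed.

Lemma comb m : 1 < m -> forall h n (A : {set T}) c,
  #|T| - size (Sq c) <= h -> A \subset Lv -> (forall y, y \in A -> anc c y) ->
  m ^ n <= #|A| ->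
  exists ys cs : seq T, [/\ (n <= size ys) || (m <= size ys), uniq ys,
     {subset ys <= A} &
     forall i j, i < j -> j < size ys -> lcaP (nth r cs i) (nth r ys i) (nth r ys j)].
Proof.
move=> m1; elim=> [|h IH] [|n] A c Hh sA Hc Hm.
- by exists [::], [::]; split.
- exfalso.
  have cA : 1 < #|A| by apply: leq_trans m1 (leq_trans (ar_pos n m1) Hm).
  have [y yA] : exists y, y \in A by apply/card_gt0P; apply: ltnW.
  have cy := A_neq sA cA Hc yA.
  have [_ _ _ _ Hs] := nxt_props (Hc y yA) cy.
  have := sizeS (nxt c y); rewrite Hs => H1.
  by move: Hh; rewrite leqn0 subn_eq0 => /(leq_trans H1); rewrite ltnn.
- by exists [::], [::]; split.
have cA : 1 < #|A| by apply: leq_trans m1 (leq_trans (ar_pos n m1) Hm).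
have cne : forall y, y \in A -> c != y by move=> y yA; apply: A_neq sA cA Hc yA.
set Bs := [set nxt c y | y in A].
case: (leqP m #|Bs|) => HB.
  pose rep b := odflt r [pick y | (y \in A) && (nxt c y == b)].
  have Hrep : forall b, b \in Bs -> rep b \in A /\ nxt c (rep b) = b.
    move=> b /imsetP [y yA ->]; rewrite /rep.
    case: pickP => [z /andP [zA /eqP ->] //|/(_ y)].
    by rewrite yA eqxx.
  exists [seq rep b | b <- enum Bs], (nseq #|Bs| c); split.
  - by rewrite size_map -cardE HB orbT.
  - rewrite map_inj_in_uniq ?enum_uniq // => b1 b2.
    rewrite !mem_enum => b1B b2B E.
    by rewrite -(proj2 (Hrep _ b1B)) E (proj2 (Hrep _ b2B)).
  - by move=> z /mapP [b]; rewrite mem_enum => bB ->; case: (Hrep _ bB).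
  move=> i j ij; rewrite size_map => jB.
  have iB : i < size (enum Bs) by apply: ltn_trans ij jB.
  rewrite nth_nseq cardE iB !(nth_map r) //.
  have bi := mem_nth r iB; have bj := mem_nth r jB.
  rewrite mem_enum in bi; rewrite mem_enum in bj.
  have [ai ni] := Hrep _ bi; have [aj nj] := Hrep _ bj.
  apply: split_nxt; [exact: Hc|exact: Hc|exact: cne|exact: cne|].
  rewrite ni nj nth_uniq ?enum_uniq //.
  by rewrite neq_ltn ij.
have [b Hb] : exists b, (m ^ n).-1 < #|[set y | (y \in A) && (nxt c y == b)]|.
  apply: pigeon_ex; apply: ar_pig HB _ _ => //; first by rewrite expn_gt0 (ltnW m1).
  by rewrite -expnS.
set B := [set y | (y \in A) && (nxt c y == b)] in Hb.
have HmB : m ^ n <= #|B| by apply: ar_pred Hb _; rewrite expn_gt0 (ltnW m1).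
have [y0 y0B] : exists y, y \in B.
  by apply/card_gt0P; apply: leq_trans HmB; rewrite expn_gt0 (ltnW m1).
have Bprop : forall y, y \in B -> y \in A /\ nxt c y = b.
  by move=> y; rewrite inE => /andP [-> /eqP ->].
have [y0A y0b] := Bprop _ y0B.
have [_ _ _ _ Hsb] := nxt_props (Hc _ y0A) (cne _ y0A).
have Hh' : #|T| - size (Sq b) <= h by rewrite -y0b Hsb; apply: ar_sub.
have Hcb : forall y, y \in B -> anc b y.
  move=> y yB; have [yA <-] := Bprop _ yB.
  by have [] := nxt_props (Hc _ yA) (cne _ yA).
have sB : B \subset A by apply/subsetP => y /Bprop [].
case: (boolP [exists y, (y \in A) && (nxt c y != b)]) => [/existsP [y1 /andP [y1A y1b]] | /existsPn Hall].
  have [ys [cs [Hsz Hu Hsub Hl]]] := IH n B b Hh' (subset_trans sB sA) Hcb HmB.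
  exists (y1 :: ys), (c :: cs); split.
  - by move: Hsz => /orP [H|H]; apply/orP; [left|right; apply: leqW].
  - rewrite /= Hu andbT; apply/negP => /Hsub /Bprop [_ E].
    by move: y1b; rewrite E eqxx.
  - move=> z; rewrite inE => /orP [/eqP -> //|/Hsub].
    by move/(subsetP sB).
  move=> [|i] [|j] //= ij jl.
    have yB : nth r ys j \in B by apply: Hsub; apply: mem_nth.
    have [yA yb] := Bprop _ yB.
    by apply: split_nxt; [exact: Hc|exact: Hc|exact: cne|exact: cne|rewrite yb].
  exact: Hl.
have HcA : forall y, y \in A -> anc b y.
  move=> y yA; apply: Hcb; rewrite inE yA /=.
  by have := Hall y; rewrite yA /= negbK.
exact: IH n.+1 A b Hh' sA HcA Hm.
Qed.

Lemma geo ci cj yi yj yl (al be : 'Z_q) :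
  lcaP ci yi yj -> lcaP ci yi yl -> lcaP cj yj yl ->
  D yi = al -> D yj = al -> D yl = al -> D ci = be -> D cj = be ->
  Good e lab (al - be)%R yi yj yl.
Proof.
move=> [Hi_i Hi_j Li] [_ Hi_l Li'] [Hj_j Hj_l Lj] Dyi Dyj Dyl Dci Dcj.
have Hij : anc ci cj := Lj ci Hi_j Hi_l.
have [_ _ lup] := up_tpath Hij.
exists cj, (up ci cj ++ down ci yi), (down cj yj), (down cj yl); split.
- apply: tpath_cat (up_tpath Hij) (down_tpath Hi_i) _.
  move=> w wd; have [wyi ciw wci] := down_mem Hi_i wd.
  apply/negP => wu.
  have wcj : anc w cj.
    move: wu; rewrite inE => /orP [/eqP -> | /(up_mem Hij) [] //]; exact: anc_refl.
  have := Li w wyi (anc_trans wcj Hj_j) => wci'.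
  by move: wci; rewrite (anc_anti wci' ciw) eqxx.
- exact: down_tpath Hj_j.
- exact: down_tpath Hj_l.
- split; apply: disjP => w.
  + rewrite mem_cat => /orP [wu | wd] w2.
      have [wc nwc] := up_mem Hij wu; have [_ cw _] := down_mem Hj_j w2.
      by move: nwc; rewrite (anc_anti wc cw) eqxx.
    have [wyi ciw wci] := down_mem Hi_i wd; have [wyj _ _] := down_mem Hj_j w2.
    by move: wci; rewrite (anc_anti (Li w wyi wyj) ciw) eqxx.
  + rewrite mem_cat => /orP [wu | wd] w2.
      have [wc nwc] := up_mem Hij wu; have [_ cw _] := down_mem Hj_l w2.
      by move: nwc; rewrite (anc_anti wc cw) eqxx.
    have [wyi ciw wci] := down_mem Hi_i wd; have [wyl _ _] := down_mem Hj_l w2.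
    by move: wci; rewrite (anc_anti (Li' w wyi wyl) ciw) eqxx.
  + move=> w1 w2.
    have [wyj cw wc] := down_mem Hj_j w1; have [wyl _ _] := down_mem Hj_l w2.
    by move: wc; rewrite (anc_anti (Lj w wyj wyl) cw) eqxx.
- split.
  + by rewrite weight_cat lup D_up // D_down // Dyi Dci Dcj subrr add0r.
  + by rewrite D_down // Dyj Dcj.
  + by rewrite D_down // Dyl Dcj.
Qed.

End Struct.
Lemma Good_s12 (T : finType) (e : rel T) q (lab : T -> T -> 'Z_q) a x1 x2 x3 :
  Good e lab a x1 x2 x3 -> Good e lab a x2 x1 x3.
Proof.
move=> [v [p1 [p2 [p3 [t1 t2 t3 [d12 d13 d23] [w1 w2 w3]]]]]].
exists v, p2, p1, p3; split => //; split => //; exact: disj_sym.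
Qed.

Lemma Good_s23 (T : finType) (e : rel T) q (lab : T -> T -> 'Z_q) a x1 x2 x3 :
  Good e lab a x1 x2 x3 -> Good e lab a x1 x3 x2.
Proof.
move=> [v [p1 [p2 [p3 [t1 t2 t3 [d12 d13 d23] [w1 w2 w3]]]]]].
exists v, p1, p3, p2; split => //; split => //; exact: disj_sym.
Qed.

Lemma sort3 (G : nat -> nat -> nat -> Prop) :
  (forall i j l, G i j l -> G j i l) -> (forall i j l, G i j l -> G i l j) ->
  (forall i j l, i < j -> j < l -> G i j l) ->
  forall i j l, i != j -> i != l -> j != l -> G i j l.
Proof.
move=> s12 s23 H i j l.
case: (ltngtP i j) => // ij _; case: (ltngtP i l) => // il _; case: (ltngtP j l) => // jl _.
- exact: H _ _ _ ij jl.
- exact: s23 _ _ _ (H _ _ _ il jl).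
- by have := ltn_trans il (ltn_trans ij jl); rewrite ltnn.
- exact: s23 _ _ _ (s12 _ _ _ (H _ _ _ il ij)).
- exact: s12 _ _ _ (H _ _ _ ij il).
- by have := ltn_trans ij (ltn_trans il jl); rewrite ltnn.
- exact: s12 _ _ _ (s23 _ _ _ (H _ _ _ jl il)).
- exact: s12 _ _ _ (s23 _ _ _ (s12 _ _ _ (H _ _ _ jl ij))).
Qed.
Theorem lemma3 :
  exists f1 : nat -> nat -> nat,
  forall (k q : nat), 2 <= k -> 2 <= q ->
  forall (T : finType) (e : rel T) (lab : T -> T -> 'Z_q),
    is_tree e ->
    (forall x y : T, lab x y = lab y x) ->
  forall L : {set T}, L \subset leaves e -> #|L| = f1 k q ->
  exists L0 : {set T}, [/\ L0 \subset L, #|L0| = k &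
  exists a : 'Z_q,
    forall x1 x2 x3 : T, x1 \in L0 -> x2 \in L0 -> x3 \in L0 ->
      x1 != x2 -> x1 != x3 -> x2 != x3 ->
      exists v : T, exists p1 p2 p3 : seq T,
        [/\ tpath e v p1 x1, tpath e v p2 x2, tpath e v p3 x3,
            [/\ [predI p1 & p2] =i pred0, [predI p1 & p3] =i pred0
              & [predI p2 & p3] =i pred0] &
            [/\ weight lab v p1 = a, weight lab v p2 = a
              & weight lab v p3 = a]]].
Proof.
exists (fun k q => ((q * q * k.-1).+1 ^ (q * q * k.-1).+1).+1).
move=> k q k2 q2 T e lab [[esy irr] conn acyc] labsym L sL cL.
set m := (q * q * k.-1).+1 in cL.
have m1 : 1 < m.
  by rewrite /m ltnS !muln_gt0 (ltnW q2) /= -subn1 subn_gt0.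
have [r rL] : exists r, r \in L by apply/card_gt0P; rewrite cL.
have Hex : forall x, exists p, [&& path e r p, uniq (r :: p) & last r p == x].
  move=> x; case/connectP: (conn r x) => p pp ->.
  by case: (shortenP pp) => p' pp' up' _; exists p'; rewrite pp' up' eqxx.
pose P x := xchoose (Hex x).
have Pt : forall x, tpath e r (P x) x.
  by move=> x; have /and3P [h1 h2 /eqP h3] := xchooseP (Hex x); split.
have Pu : forall x p, tpath e r p x -> p = P x.
  by move=> x p tp; apply: (tpath_uniq esy acyc tp (Pt x)).
set Lv := L :\ r.
have LP : forall x, x \in Lv -> forall y, x \in Sq r P y -> x = y.
  move=> x; rewrite in_setD1 => /andP [xr xL] y H.
  exact: (leaf_anc esy Pt Pu (subsetP sL _ xL) xr H).
have HLv : #|Lv| = m ^ m by move: cL; rewrite (cardsD1 r L) rL add1n => [[]].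
have [ys [cs [Hsz Hu Hsub Hl]]] := comb Pt Pu LP m1 (h := #|T|) (n := m) (A := Lv) (c := r)
   (leq_subr _ _) (subxx _) (fun y _ => anc_r r P y) (eq_leq (esym HLv)).
have Hs : m <= size ys by move: Hsz; rewrite orbb.
set s := size ys in Hs Hl.
pose g (i : 'I_s) := (D lab r P (nth r ys i), D lab r P (nth r cs i)).
have [[al be] Hab] : exists ab, k.-1 < #|[set i | (i \in [set: 'I_s]) && (g i == ab)]|.
  apply: pigeon_ex.
  rewrite cardsT card_ord.
  apply: (@leq_ltn_trans (q * q * k.-1)); last exact: Hs.
  apply: leq_mul => //.
  apply: leq_trans (max_card _) _.
  by rewrite card_prod card_ord Zp_cast.
set X := [set i | _ ] in Hab.
have kX : k <= #|X| by apply: ar_pred Hab _; apply: leq_trans k2.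
set xs := take k (enum X).
have Hxs : size xs = k by rewrite size_takel // -cardE.
have uxs : uniq xs := take_uniq _ (enum_uniq _).
exists [set x in [seq nth r ys (val i) | i <- xs]]; split.
- apply/subsetP => x; rewrite inE => /mapP [i _ ->].
  have : nth r ys i \in ys := mem_nth r (ltn_ord i).
  by move/Hsub; rewrite in_setD1 => /andP [_ ->].
- rewrite cardsE (card_uniqP _) ?size_map ?Hxs // map_inj_in_uniq // => i j _ _ /eqP.
  have ri := ltn_ord i; have rj := ltn_ord j.
  by rewrite nth_uniq // => /eqP /val_inj.
exists (al - be)%R => x1 x2 x3 h1 h2 h3 n12 n13 n23.
have getI : forall x, x \in [set x in [seq nth r ys (val i) | i <- xs]] ->
    exists i : 'I_s, x = nth r ys i /\ i \in X.
  move=> x; rewrite inE => /mapP [i ixs ->]; exists i; split => //.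
  by move: ixs => /mem_take; rewrite mem_enum.
pose gd n := [&& n < s, D lab r P (nth r ys n) == al & D lab r P (nth r cs n) == be].
have gdX : forall i : 'I_s, i \in X -> gd i.
  move=> i; rewrite inE => /andP [_ /eqP E].
  have F1 : D lab r P (nth r ys i) = al := congr1 fst E.
  have F2 : D lab r P (nth r cs i) = be := congr1 snd E.
  by rewrite /gd ltn_ord /= F1 F2 !eqxx.
have [i1 [E1 X1]] := getI _ h1; have [i2 [E2 X2]] := getI _ h2; have [i3 [E3 X3]] := getI _ h3.
subst x1 x2 x3.
have Hsort := sort3 (G := fun a b c => gd a -> gd b -> gd c ->
    Good e lab (al - be)%R (nth r ys a) (nth r ys b) (nth r ys c)).
apply: (Hsort _ _ _ i1 i2 i3) (gdX _ X1) (gdX _ X2) (gdX _ X3).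
- by move=> a b c H ga gb gc; apply: Good_s12; apply: H.
- by move=> a b c H ga gb gc; apply: Good_s23; apply: H.
- move=> a b c ab bc /and3P [a_s /eqP Da /eqP Dca] /and3P [b_s /eqP Db /eqP Dcb] /and3P [c_s /eqP Dc _].
  exact: (geo esy labsym Pt Pu (Hl a b ab b_s) (Hl a c (ltn_trans ab bc) c_s) (Hl b c bc c_s) Da Db Dc Dca Dcb).
- by apply: contra n12 => /eqP /val_inj ->.
- by apply: contra n13 => /eqP /val_inj ->.
- by apply: contra n23 => /eqP /val_inj ->.
Qed.
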